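(* For all integers $k\ge1$ and $d\ge1$, $M_k(d)\ge M'_k(d)$, where \[M'_k(d):=\max\Big\{\prod_{i=1}^s m_{k_i}(d_i)\ :\ s\ge1,\ \sum_{i=1}^s k_i=k,\ \sum_{i=1}^s d_i=d\Big\},\] the maximum taken over positive integers $k_i$ and nonnegative integers $d_i$.
   Context: A set is separated if any two distinct points are at distance at least $1$. $m_k(d)$ is the maximum cardinality of a set in $\mathbb{R}^d$ determining at most $k$ distinct distances ($m_k(0)=1$). For $\varepsilon>0$, a separated set $P$ is an $\varepsilon$-nearly $k$-distance set (with distances $1\le t_1<\dots<t_k$) if $\|p_1-p_2\|\in\bigcup_{i=1}^k[t_i,t_i+\varepsilon]$ for all distinct $p_1,p_2\in P$. $M_k(d)$ is the largest $M$ such that for every $\varepsilon>0$ there exists an $\varepsilon$-nearly $k$-distance set in $\mathbb{R}^d$ of cardinality $M$. *)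

(* Defs.v *)
From Stdlib Require Import Rdefinitions.
From HB Require Import structures.
From mathcomp Require Import all_boot all_order all_algebra.
From mathcomp Require Import Rstruct.
Set Implicit Arguments. Unset Strict Implicit. Unset Printing Implicit Defensive.
Import Order.TTheory GRing.Theory Num.Theory.
Local Open Scope ring_scope.

Definition dist (d : nat) (x y : 'rV[R]_d) : R :=
  Num.sqrt (\sum_(i < d) (x ord0 i - y ord0 i) ^+ 2).

(* P (a finite set, given as a duplicate-free list) determines at most k
   distinct distances *)
Definition at_most_k_distance (k d : nat) (P : seq 'rV[R]_d) : Prop :=
  uniq P /\
  exists ts : seq R, (size ts <= k)%N /\
    forall p q, p \in P -> q \in P -> p != q -> dist p q \in ts.

Definition is_m (k d m : nat) : Prop :=
  (exists P : seq 'rV[R]_d, @at_most_k_distance k d P /\ size P = m) /\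
  (forall P : seq 'rV[R]_d, @at_most_k_distance k d P -> (size P <= m)%N).

Definition separated (d : nat) (P : seq 'rV[R]_d) : Prop :=
  uniq P /\ forall p q, p \in P -> q \in P -> p != q -> 1 <= dist p q.

Definition eps_nearly_k_distance (eps : R) (k d : nat) (P : seq 'rV[R]_d) : Prop :=
  separated P /\
  exists ts : seq R,
    size ts = k /\ sorted <%R ts /\ (forall t, t \in ts -> 1 <= t) /\
    forall p q, p \in P -> q \in P -> p != q ->
      exists2 t, t \in ts & t <= dist p q <= t + eps.

Definition nearly_admissible (k d M : nat) : Prop :=
  forall eps : R, 0 < eps ->
    exists P : seq 'rV[R]_d, @eps_nearly_k_distance eps k d P /\ size P = M.

Definition is_M (k d M : nat) : Prop :=
  nearly_admissible k d M /\ (forall M', nearly_admissible k d M' -> (M' <= M)%N).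

(* Main.v *)
Require Import Defs.
From Stdlib Require Import Rdefinitions.
From mathcomp Require Import all_boot all_order all_algebra.
From mathcomp Require Import Rstruct lra.
Set Implicit Arguments. Unset Strict Implicit. Unset Printing Implicit Defensive.
Import Order.TTheory GRing.Theory Num.Theory.
Local Open Scope ring_scope.

Definition sqd (d : nat) (x y : 'rV[R]_d) : R :=
  \sum_(i < d) (x ord0 i - y ord0 i) ^+ 2.

Lemma distE d (x y : 'rV[R]_d) : dist x y = Num.sqrt (sqd x y).
Proof. by []. Qed.

Lemma sqd_ge0 d (x y : 'rV[R]_d) : 0 <= sqd x y.
Proof. by apply: sumr_ge0 => i _; apply: sqr_ge0. Qed.

Lemma sqd_row_mx a b (x x' : 'rV[R]_a) (y y' : 'rV[R]_b) :
  sqd (row_mx x y) (row_mx x' y') = sqd x x' + sqd y y'.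
Proof.
rewrite /sqd big_split_ord /=; congr (_ + _); apply: eq_bigr => i _.
  by rewrite !row_mxEl.
by rewrite !row_mxEr.
Qed.

Lemma sqd_scale b (l : R) (y y' : 'rV[R]_b) :
  sqd (l *: y) (l *: y') = l ^+ 2 * sqd y y'.
Proof.
rewrite /sqd mulr_sumr; apply: eq_bigr => i _; rewrite !mxE.
by rewrite -mulrBr exprMn.
Qed.

Lemma sqd_eq0 d (x y : 'rV[R]_d) : sqd x y = 0 -> x = y.
Proof.
move=> h; apply/rowP => j.
have := @psumr_eq0P _ _ xpredT (fun i => (x ord0 i - y ord0 i) ^+ 2) (fun i _ => sqr_ge0 _) h j isT.
move/eqP; rewrite sqrf_eq0 subr_eq0 => /eqP.
by have -> : (0 : 'I_1) = ord0 by apply: val_inj.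
Qed.

Lemma dist_gt0 d (x y : 'rV[R]_d) : x != y -> 0 < dist x y.
Proof.
move=> nxy; rewrite distE sqrtr_gt0 lt_neqAle sqd_ge0 andbT.
apply/eqP => h; move/eqP: nxy; apply; exact: sqd_eq0 (esym h).
Qed.

Lemma dist_ge0 d (x y : 'rV[R]_d) : 0 <= dist x y.
Proof. exact: sqrtr_ge0. Qed.

Lemma sqr_dist d (x y : 'rV[R]_d) : dist x y ^+ 2 = sqd x y.
Proof. by rewrite distE sqr_sqrtr // sqd_ge0. Qed.

Lemma upper_bound (s : seq R) : exists D, 0 <= D /\ forall v, v \in s -> v <= D.
Proof.
elim: s => [|a s [D [D0 HD]]]; first by exists 0; split.
exists (Num.max a D); split; first by rewrite le_max D0 orbT.
move=> v; rewrite inE => /orP[/eqP ->|/HD h]; rewrite le_max ?lexx ?h ?orbT //.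
Qed.

Lemma lower_bound (s : seq R) : (forall v, v \in s -> 0 < v) ->
  exists m, 0 < m /\ forall v, v \in s -> m <= v.
Proof.
elim: s => [|a s IH] H; first by exists 1; split.
have [m [m0 Hm]] : exists m, 0 < m /\ forall v, v \in s -> m <= v.
  by apply: IH => v hv; apply: H; rewrite inE hv orbT.
exists (Num.min a m); split.
  by rewrite lt_min m0 H // mem_head.
move=> v; rewrite inE => /orP[/eqP ->|/Hm h]; rewrite ge_min ?lexx ?h ?orbT //.
Qed.

Definition good (eps : R) d (P : seq 'rV[R]_d) (T : seq R) :=
  forall p q, p \in P -> q \in P -> p != q ->
    exists2 t, t \in T & t <= dist p q <= t + eps.

Lemma sqd_xx d (x : 'rV[R]_d) : sqd x x = 0.
Proof. by rewrite /sqd big1 // => i _; rewrite subrr expr0n. Qed.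

Lemma sqrt_bounds (w e a : R) : 0 <= w -> 0 <= e -> 0 <= a ->
  a <= 2 * w * e + e ^+ 2 -> w <= Num.sqrt (a + w ^+ 2) <= w + e.
Proof.
move=> hw he ha hb; have hw2 := sqr_ge0 w; apply/andP; split.
  rewrite -{1}(ger0_norm hw) -sqrtr_sqr ler_sqrt; lra.
have hwe : 0 <= w + e by lra.
rewrite -[w + e]ger0_norm // -sqrtr_sqr ler_sqrt; first nra.
exact: sqr_ge0.
Qed.

Lemma step (eps : R) (heps : 0 < eps) a b (A : seq 'rV[R]_a) (B : seq 'rV[R]_b)
  (T U : seq R) :
  uniq A -> uniq B -> (forall t, t \in T -> 1 <= t) -> good eps A T ->
  (forall y y', y \in B -> y' \in B -> y != y' -> dist y y' \in U) ->
  exists P : seq 'rV[R]_(a + b), uniq P /\ size P = (size A * size B)%N /\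
    exists T', (size T' <= size T + size U)%N /\ (forall t, t \in T' -> 1 <= t)
      /\ good eps P T'.
Proof.
move=> uA uB T1 gA dU.
set U' := [seq u <- U | 0 < u].
have [m [m0 Hm]] : exists m, 0 < m /\ forall v, v \in U' -> m <= v.
  by apply: lower_bound => v; rewrite mem_filter => /andP[].
have [D [D0 HD]] := upper_bound [seq dist x x' | x <- A, x' <- A].
set l := (1 + D ^+ 2 / eps) / m.
have hD2e : 0 <= D ^+ 2 / eps by rewrite divr_ge0 ?sqr_ge0 // ltW.
have l0 : 0 < l by rewrite /l divr_gt0 //; lra.
have lu u : u \in U' -> 1 + D ^+ 2 / eps <= l * u.
  move=> /Hm hu; have h1 : 1 <= u / m by rewrite ler_pdivlMr // mul1r.
  have -> : l * u = (1 + D ^+ 2 / eps) * (u / m) by rewrite /l mulrAC mulrA.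
  nra.
exists [seq row_mx x (l *: y) | x <- A, y <- B]; split.
  apply: allpairs_uniq => // -[x y] [x' y'] _ _ /= /eq_row_mx [-> /scalerI].
  by rewrite gt_eqF // => /(_ isT) ->.
split; first by rewrite size_allpairs.
exists (T ++ [seq l * u | u <- U']); split.
  by rewrite size_cat size_map leq_add2l size_filter count_size.
split.
  move=> t; rewrite mem_cat => /orP[/T1 //|/mapP[u hu ->]].
  have := lu u hu; lra.
move=> p q /allpairsP [[x y] [hx hy ->]] /allpairsP [[x' y'] [hx' hy' ->]] /= hne.
case: (eqVneq y y') => [eyy|nyy].
  rewrite -eyy in hne *.
  have nxx : x != x' by apply: contraNneq hne => ->.
  have [t ht Ht] := gA _ _ hx hx' nxx.
  exists t; first by rewrite mem_cat ht.
  by rewrite distE sqd_row_mx sqd_xx addr0 -distE.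
have uU' : dist y y' \in U' by rewrite mem_filter; apply/andP; split; [exact: dist_gt0 | exact: dU].
exists (l * dist y y'); first by rewrite mem_cat; apply/orP; right; apply: map_f.
rewrite [dist (row_mx _ _) _]distE sqd_row_mx sqd_scale -(sqr_dist y y') -exprMn.
have hw := lu _ uU'.
have hxx : dist x x' <= D by apply: HD; apply: allpairs_f.
have hx0 := dist_ge0 x x'.
rewrite -sqr_dist; apply: sqrt_bounds;
  [by apply: mulr_ge0; [exact: ltW | exact: dist_ge0] | exact: ltW | exact: sqr_ge0 |].
set w := l * dist y y' in hw *.
have hwe : eps + D ^+ 2 <= w * eps.
  have := ler_wpM2r (ltW heps) hw; rewrite mulrDl mul1r mulfVK //; last by rewrite gt_eqF.
have hdd : dist x x' ^+ 2 <= D ^+ 2 by rewrite ler_sqr // (le_trans hx0).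
have := sqr_ge0 eps; nra.
Qed.

Lemma build (eps : R) (heps : 0 < eps) : forall s (ks ds ms : 'I_s -> nat),
  (forall i, is_m (ks i) (ds i) (ms i)) ->
  exists P : seq 'rV[R]_(\sum_(i < s) ds i), uniq P /\
    size P = (\prod_(i < s) ms i)%N /\
    exists T, (size T <= \sum_(i < s) ks i)%N /\ (forall t, t \in T -> 1 <= t)
      /\ good eps P T.
Proof.
elim=> [|s IH] ks ds ms hms.
  rewrite !big_ord0; exists [:: 0]; split => //; split => //.
  exists [::]; split => //; split => // p q; rewrite !inE => /eqP -> /eqP ->.
  by rewrite eqxx.
have [P [uP [sP [T [sT [T1 gP]]]]]] :=
  IH (fun i => ks (widen_ord (leqnSn s) i)) (fun i => ds (widen_ord (leqnSn s) i))
     (fun i => ms (widen_ord (leqnSn s) i)) (fun i => hms _).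
have [[B [[uB [U [sU HU]]] sB]] _] := hms ord_max.
have [Q [uQ [sQ [T' [sT' [T1' gQ]]]]]] := step heps uP uB T1 gP HU.
rewrite !big_ord_recr /=.
exists Q; split => //; split; first by rewrite sQ sP sB.
exists T'; split => //; apply: (leq_trans sT'); exact: leq_add.
Qed.

Lemma pad (k : nat) (T : seq R) : (size T <= k)%N -> (forall t, t \in T -> 1 <= t) ->
  exists ts : seq R, size ts = k /\ sorted <%R ts /\ (forall t, t \in ts -> 1 <= t) /\
    {subset T <= ts}.
Proof.
move=> sT T1.
have ext : forall n (T0 : seq R), uniq T0 -> (forall t, t \in T0 -> 1 <= t) ->
  exists ts : seq R, uniq ts /\ size ts = (size T0 + n)%N /\
    (forall t, t \in ts -> 1 <= t) /\ {subset T0 <= ts}.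
  elim=> [|n IH] T0 u0 h0; first by exists T0; rewrite addn0; do !split => //.
  have [M [M0 HM]] := upper_bound T0.
  have nin : M + 1 \notin T0.
    by apply/negP => /HM; lra.
  have h0' : forall t, t \in M + 1 :: T0 -> 1 <= t.
    move=> t; rewrite inE => /orP[/eqP -> | /h0 //]; lra.
  have u1 : uniq (M + 1 :: T0) by rewrite /= nin u0.
  have [ts [uts [sts [h1 sub]]]] := IH (M + 1 :: T0) u1 h0'.
  exists ts; split => //; split; first by rewrite sts /= addSnnS.
  split => // t ht; apply: sub; by rewrite inE ht orbT.
have T1' : forall t, t \in undup T -> 1 <= t by move=> t; rewrite mem_undup => /T1.
have [ts [uts [sts [h1 sub]]]] := ext (k - size (undup T))%N (undup T) (undup_uniq T) T1'.
exists (sort <=%O ts); split.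
  rewrite size_sort sts subnKC //; exact: leq_trans (size_undup T) sT.
split; first by rewrite sort_lt_sorted.
split; first by move=> t; rewrite mem_sort => /h1.
by move=> t ht; rewrite mem_sort; apply: sub; rewrite mem_undup.
Qed.

Theorem proposition1 (k d : nat) (hk : (1 <= k)%N) (hd : (1 <= d)%N)
  (s : nat) (hs : (1 <= s)%N) (ks ds ms : 'I_s -> nat)
  (hks : forall i, (1 <= ks i)%N)
  (hsumk : (\sum_(i < s) ks i)%N = k)
  (hsumd : (\sum_(i < s) ds i)%N = d)
  (hms : forall i, is_m (ks i) (ds i) (ms i)) :
  nearly_admissible k d (\prod_(i < s) ms i)%N /\
  (forall M, is_M k d M -> ((\prod_(i < s) ms i) <= M)%N).
Proof.
have adm : nearly_admissible k d (\prod_(i < s) ms i)%N.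
  move=> eps heps; subst d k.
  have [P [uP [sP [T [sT [T1 gP]]]]]] := build heps hms.
  have [ts [sts [sorts [ts1 sub]]]] := pad sT T1.
  exists P; split => //; split.
    split => // p q hp hq hpq; have [t ht /andP[h1 _]] := gP p q hp hq hpq.
    exact: le_trans (T1 _ ht) h1.
  exists ts; split => //; split => //; split => // p q hp hq hpq.
  have [t ht h] := gP p q hp hq hpq; exists t => //; exact: sub.
split => // M [_ HM]; exact: HM.
Qed.
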